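(* Let $0<\delta\le1$ and let $s\in\{0,1\}^k$ have i.i.d. $\mathrm{Bernoulli}(p)$ entries with $p\le\frac{1-\delta}2$, placed on the nodes of a complete $B$-ary tree of depth $D$ (so $k=\sum_{j=0}^{D-1}B^j$). Apply the distillation gadget $U$ to $|s\rangle$, measure all qubits except the root in the computational basis, and run the decoding algorithm. If $B=\Omega(\delta^{-2})$, then the probability that the decoder's output $\tilde s_{root}$ differs from $s_{root}$ is at most $2^{-B^{\Omega(D)}}$.
   Context: Layers of the tree are $L_1$ (leaves), $L_2,\dots,L_D$ (root); $N_u$ denotes the children of node $u$. Distillation gadget $U$: for $i=2,3,\dots,D$ in this order (leaves to root), for each parent $u\in L_i$ and each child $c\in N_u$, apply $\mathsf{CNOT}$ with control $u$ and target $c$. Decoding algorithm, given measured bits $b_u$ for all non-root nodes: set $\tilde b_u=b_u$ for $u\in L_1$; for $i=2,\dots,D$ and each $u\in L_i$, set $\tilde s_u=\mathrm{Maj}(\tilde b_c:c\in N_u)$ (majority), and if $u$ is not the root set $\tilde b_u=\tilde s_u\oplus b_u$; output $\tilde s_{root}$. *)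

(* Defs.v *)
From HB Require Import structures.
From mathcomp Require Import all_boot all_order all_algebra.
From mathcomp Require Import reals exp Rstruct.
Set Implicit Arguments. Unset Strict Implicit. Unset Printing Implicit Defensive.
Import Order.TTheory GRing.Theory Num.Theory.

(* Nodes of the complete B-ary tree of depth D: a node is the path from the
   root (a sequence of child indices in 'I_B) of length n < D.
   Root: n = 0 (layer L_D). Leaves: n = D-1 (layer L_1). *)
Definition node_fam (D B : nat) (n : 'I_D) : finType := (n : nat).-tuple 'I_B.
Definition node (D B : nat) := {n : 'I_D & node_fam B n}.
HB.instance Definition _ (D B : nat) := Finite.on (node D B).

Section Tree.
Variables D B : nat.

Definition depth (u : node D B) : nat := val (tag u).
Definition path_of (u : node D B) : seq 'I_B := tval (tagged u).

Definition child (u c : node D B) : bool :=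
  (depth c == (depth u).+1) && (take (depth u) (path_of c) == path_of u).

Definition layer (u : node D B) : nat := D - depth u.

Definition assignment := {ffun node D B -> bool}.

Definition cnot (u c : node D B) (x : assignment) : assignment :=
  [ffun v => if v == c then xorb (x v) (x u) else x v].

Definition gadget_gates : seq (node D B * node D B) :=
  flatten [seq [seq (u, c) | u <- [seq u <- enum {: node D B} | layer u == i],
                             c <- [seq c <- enum {: node D B} | child u c]]
          | i <- iota 2 D.-1].

(* Distillation gadget U acting on the basis state |s> (a permutation of
   basis states, so U|s> = |gadget s>). *)
Definition gadget (s : assignment) : assignment :=
  foldl (fun x g => cnot g.1 g.2 x) s gadget_gates.

Definition maj (l : seq bool) : bool := (size l < (count id l).*2)%N.

(* Decoder, given measured bits b (the value of b at the root is ignored).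
   bt m u = \tilde b_u for a node u of height m (height = D-1-depth);
   st m u = \tilde s_u computed from children of height m. *)
Fixpoint bt (b : assignment) (m : nat) (u : node D B) : bool :=
  match m with
  | 0 => b u
  | m'.+1 => xorb (maj [seq bt b m' c | c <- enum {: node D B} & child u c]) (b u)
  end.

Definition st (b : assignment) (m : nat) (u : node D B) : bool :=
  maj [seq bt b m c | c <- enum {: node D B} & child u c].

(* Decoder output \tilde s_root = st (D-2) root; the decoding fails on
   input s if it differs from s_root. Measuring the basis state U|s> in the
   computational basis yields b_u = (gadget s) u with certainty. *)
Definition decoding_error (s : assignment) : bool :=
  [exists u : node D B,
     (depth u == 0%N) && (st (gadget s) (D - 2) u != s u)].

Definition bernoulli_prob (p : Rdefinitions.R) (E : pred assignment) : Rdefinitions.R :=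
  (\sum_(s : assignment | E s) \prod_(u : node D B) (if s u then p else 1 - p))%R.

Definition error_prob (p : Rdefinitions.R) : Rdefinitions.R := bernoulli_prob p decoding_error.

End Tree.

(* Main.v *)
Require Import Defs.
From mathcomp Require Import all_boot all_order all_algebra.
From mathcomp Require Import reals exp Rstruct.
From mathcomp Require Import zify ring lra.
Import Order.TTheory GRing.Theory Num.Theory.
Set Implicit Arguments. Unset Strict Implicit. Unset Printing Implicit Defensive.

Section TreeFacts.
Variables D B : nat.
Notation node := (node D B).
Notation assignment := (assignment D B).

Lemma depth_lt (u : node) : (depth u < D)%N.
Proof. by rewrite /depth; case: (tag u). Qed.

Lemma size_path (u : node) : size (path_of u) = depth u.
Proof. by rewrite /path_of /depth size_tuple. Qed.

Lemma node_eq (u v : node) : depth u = depth v -> path_of u = path_of v -> u = v.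
Proof.
case: u => n t; case: v => n' t'; rewrite /depth /path_of /= => Hn.
move: (val_inj Hn) => E; subst n' => Ht.
by congr existT; apply: val_inj.
Qed.

Lemma child_depth (u c : node) : child u c -> depth c = (depth u).+1.
Proof. by case/andP => /eqP. Qed.

Lemma child_path (u c : node) : child u c -> take (depth u) (path_of c) = path_of u.
Proof. by case/andP => _ /eqP. Qed.

Lemma parent_uniq (u u' v : node) : child u v -> child u' v -> u = u'.
Proof.
move=> H1 H2; have E1 := child_depth H1; have E2 := child_depth H2.
have Ed : depth u = depth u' by rewrite E1 in E2; case: E2.
apply: node_eq => //; by rewrite -(child_path H1) -(child_path H2) Ed.
Qed.

Definition layer_child (u c : node) : child u c -> layer u = (layer c).+1.
Proof.
move=> H; rewrite /layer (child_depth H); have := depth_lt c.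
rewrite (child_depth H); lia.
Qed.

Lemma layer_ge1 (v : node) : (1 <= layer v)%N.
Proof. rewrite /layer; have := depth_lt v; lia. Qed.

Lemma layer_le (v : node) : (layer v <= D)%N.
Proof. rewrite /layer; lia. Qed.

Lemma xorbE a b : xorb a b = a (+) b.
Proof. by case: a; case: b. Qed.

Definition cnotg (x : assignment) (g : node * node) := cnot g.1 g.2 x.

Lemma foldl_cnot (l : seq (node * node)) (y : assignment) :
  (forall g g', g \in l -> g' \in l -> g.1 != g'.2) ->
  forall v, foldl cnotg y l v = y v (+) (\big[addb/false]_(g <- l | g.2 == v) y g.1).
Proof.
elim: l y => [|g l IH] y Hl v; first by rewrite big_nil /= addbF.
rewrite /= IH; last by move=> a b Ha Hb; apply: Hl; rewrite inE ?Ha ?Hb orbT.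
rewrite big_cons.
have -> : \big[addb/false]_(g0 <- l | g0.2 == v) (cnot g.1 g.2 y) g0.1 =
          \big[addb/false]_(g0 <- l | g0.2 == v) y g0.1.
  rewrite big_seq_cond [RHS]big_seq_cond; apply: eq_bigr => g0 /andP[Hg0 _].
  rewrite /cnot ffunE; case: eqP => // E.
  by have := Hl g0 g; rewrite inE Hg0 orbT inE eqxx E eqxx => /(_ isT isT).
rewrite /cnot ffunE xorbE; case: (v =P g.2) => [->|Hv]; first by rewrite eqxx; move: (\big[addb/false]_(j <- l | j.2 == g.2) y j.1) => b; case: (y g.2); case: (y g.1); case: b.
by case: eqP => // E; case: Hv.
Qed.

Definition block (i : nat) : seq (node * node) :=
  [seq (u, c) | u <- [seq u <- enum {: node} | layer u == i],
                c <- [seq c <- enum {: node} | child u c]].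

Lemma gates_blocks : gadget_gates D B = flatten [seq block i | i <- iota 2 D.-1].
Proof. by []. Qed.

Lemma block_xor (i : nat) (y : assignment) v :
  \big[addb/false]_(g <- block i | g.2 == v) y g.1 =
  \big[addb/false]_(u | (layer u == i) && child u v) y u.
Proof.
rewrite big_mkcond /block big_allpairs_dep /=.
rewrite big_filter big_enum_cond /= big_mkcond [RHS]big_mkcond /=.
apply: eq_bigr => u _.
case: (layer u == i) => //=.
rewrite big_filter big_enum_cond /=.
case Huv: (child u v).
  rewrite (bigD1 v) /=; last exact: Huv.
  rewrite eqxx big1; first by case: (y u).
  by move=> c /andP[_ /negPf ->].
rewrite big1 // => c Hc; case: eqP => // E; subst c.
by move/negbT/negP: Huv => H; case: (H Hc).
Qed.

Lemma block_ok (i : nat) g g' : g \in block i -> g' \in block i -> g.1 != g'.2.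
Proof.
case/allpairsPdep => u [c [Hu Hc ->]]; case/allpairsPdep => u' [c' [Hu' Hc' ->]] /=.
rewrite mem_filter in Hu; rewrite mem_filter in Hc'; rewrite mem_filter in Hu'.
case/andP: Hu => /eqP Lu _; case/andP: Hu' => /eqP Lu' _; case/andP: Hc' => Hc'' _.
apply/eqP => E; subst c'. have := layer_child Hc''. rewrite Lu Lu'. lia.
Qed.

Definition Inv (s : assignment) (j : nat) (x : assignment) :=
  (forall v, (j <= layer v)%N -> x v = s v) /\
  (forall u v, child u v -> x v = s v (+) ((layer u <= j)%N && s u)).

Lemma Inv_step s k (y : assignment) : Inv s k.+1 y -> Inv s k.+2 (foldl cnotg y (block k.+2)).
Proof.
case=> Ha Hb; split.
  move=> v Hv; rewrite foldl_cnot; last exact: block_ok.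
  rewrite block_xor big1 ?addbF; first by apply: Ha; lia.
  move=> u /andP[/eqP Lu Hc]; have := layer_child Hc; lia.
move=> u0 v Hc; rewrite foldl_cnot; last exact: block_ok.
rewrite block_xor (eq_bigl (fun u => (u == u0) && (layer u0 == k.+2))); last first.
  move=> u /=; case: (u =P u0) => [->|Hne]; first by rewrite Hc andbT.
  by case Hcu: (child u v); rewrite ?andbF //; case: Hne; apply: parent_uniq Hcu Hc.
rewrite big_mkcondr big_pred1_eq /= (Hb _ _ Hc).
case: eqP => [L|L].
  rewrite Ha; last lia.
  rewrite L ltnn leqnn /=; by case: (s u0); case: (s v).
rewrite addbF (_ : (layer u0 <= k.+1)%N = (layer u0 <= k.+2)%N) //; apply/idP/idP; lia.
Qed.

Lemma gadget_spec (s : assignment) u v : (1 <= D)%N -> child u v -> gadget s v = s v (+) s u.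
Proof.
move=> D1 Hc.
have H : forall k, Inv s k.+1 (foldl cnotg s (flatten [seq block i | i <- iota 2 k])).
  elim=> [|k IH].
    split => //= u1 v1 Hc1; move: (layer_child Hc1) (layer_ge1 v1) => L1 L2.
    by rewrite (_ : (layer u1 <= 1)%N = false) ?andbF ?addbF //; lia.
  have -> : iota 2 k.+1 = iota 2 k ++ [:: k.+2] by rewrite -[k.+1]addn1 iotaD addn1 add2n.
  rewrite map_cat flatten_cat foldl_cat /= cats0; exact: Inv_step.
have [_ Hb] := H D.-1.
rewrite /gadget gates_blocks.
have -> : foldl (fun x g => cnot g.1 g.2 x) s (flatten [seq block i | i <- iota 2 D.-1])
  = foldl cnotg s (flatten [seq block i | i <- iota 2 D.-1]) by [].
rewrite (Hb _ _ Hc) (_ : (layer u <= D.-1.+1)%N = true) //.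
have := layer_le u; lia.
Qed.


Definition wmaj (l : seq bool) : bool := (size l <= (count id l).*2)%N.

Fixpoint W (s : assignment) (m : nat) (u : node) : bool :=
  match m with
  | 0 => s u
  | m'.+1 => wmaj [seq W s m' c | c <- enum {: node} & child u c]
  end.

Lemma count_mono (L : seq node) (e w : pred node) :
  (forall d, d \in L -> e d -> w d) -> (count e L <= count w L)%N.
Proof.
elim: L => [|a L IH] //= H.
have H1 : (e a <= w a)%N by case: (e a) (H a (mem_head _ _)) => // ->.
apply: leq_add; first exact: H1.
apply: IH => d Hd; apply: H; by rewrite inE Hd orbT.
Qed.

Lemma list_maj (L : seq node) (x : bool) (e w : pred node) :
  (forall d, d \in L -> e d -> w d) ->
  maj [seq e d (+) x | d <- L] (+) x -> wmaj [seq w d | d <- L].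
Proof.
move=> H Hm.
have Hw : wmaj [seq e d | d <- L].
  move: Hm; rewrite /maj /wmaj !size_map !count_map.
  have ce : forall f : pred node, count (preim f id) L = count f L by [].
  rewrite !ce; have Hc := count_predC e L.
  case: x.
    rewrite addbT.
    have -> : count (fun d => e d (+) true) L = count (predC e) L.
      by apply: eq_count => d; rewrite /= addbT.
    move=> /negP Hn; lia.
  have -> : count (fun d => e d (+) false) L = count e L.
    by apply: eq_count => d; rewrite /= addbF.
  rewrite addbF; lia.
move: Hw; rewrite /wmaj !size_map !count_map => Hw.
apply: (leq_trans Hw); rewrite leq_double; exact: count_mono.
Qed.

Section Decoder.
Variable s : assignment.
Hypothesis D1 : (1 <= D)%N.
Let b := gadget s.

Lemma PQ m : (forall u c, child u c -> (depth c + m.+1 = D)%N -> (bt b m c (+) s u) -> W s m c) /\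
            (forall v, (depth v + m.+2 = D)%N -> (st b m v (+) s v) -> W s m.+1 v).
Proof.
have QfromP : forall m, (forall u c, child u c -> (depth c + m.+1 = D)%N -> (bt b m c (+) s u) -> W s m c) ->
             (forall v, (depth v + m.+2 = D)%N -> (st b m v (+) s v) -> W s m.+1 v).
  move=> k Pk v Hv Hst /=.
  apply: (list_maj (x := s v) (e := fun d => bt b k d (+) s v)).
    move=> d; rewrite mem_filter => /andP[Hcd _] He; apply: (Pk v) => //.
    by rewrite (child_depth Hcd) addSnnS.
  have -> : [seq bt b k d (+) s v (+) s v | d <- [seq c <- enum {: node} | child v c]] =
            [seq bt b k d | d <- [seq c <- enum {: node} | child v c]].
    by apply: eq_map => d; rewrite -addbA addbb addbF.
  exact: Hst.
elim: m => [|m [IHP IHQ]].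
  split; last by apply: QfromP => u c Hc _ /=; rewrite /b (gadget_spec _ D1 Hc) -addbA addbb addbF.
  by move=> u c Hc _ /=; rewrite /b (gadget_spec _ D1 Hc) -addbA addbb addbF.
have P' : forall u c, child u c -> (depth c + m.+2 = D)%N -> (bt b m.+1 c (+) s u) -> W s m.+1 c.
  move=> u c Hc Hd /=; rewrite xorbE -/(st b m c) /b (gadget_spec _ D1 Hc) -/b.
  rewrite -!addbA addbb addbF; exact: IHQ.
by split => //; apply: QfromP.
Qed.

End Decoder.

Lemma decode_W (s : assignment) : (2 <= D)%N -> decoding_error s ->
  exists u, depth u = 0%N /\ W s (D - 2).+1 u.
Proof.
move=> D2 /existsP[u /andP[/eqP H0 Hne]]; exists u; split => //.
have D1 : (1 <= D)%N by lia.
apply: (proj2 (PQ s D1 (D - 2))); first by rewrite H0; lia.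
by move: Hne; case: (st _ _ _); case: (s u).
Qed.

End TreeFacts.

Set Implicit Arguments. Unset Strict Implicit. Unset Printing Implicit Defensive.
Local Open Scope ring_scope.
Local Notation R := Rdefinitions.R.

Section Prob.
Variables D B : nat.
Notation node := (node D B).
Notation assignment := (assignment D B).
Variable p : R.
Hypothesis p0 : 0 <= p.
Hypothesis p1 : p <= 1.

Ltac plra := let h0 := fresh in let h1 := fresh in have h0 := p0; have h1 := p1; lra.

Definition wt (s : assignment) : R := \prod_u (if s u then p else 1 - p).
Definition Ex (F : assignment -> R) : R := \sum_s F s * wt s.

Lemma wt_ge0 s : 0 <= wt s.
Proof. apply: prodr_ge0 => u _; case: ifP => _; plra. Qed.

Lemma Ex_mono F G : (forall s, F s <= G s) -> Ex F <= Ex G.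
Proof. move=> H; apply: ler_sum => s _; apply: ler_wpM2r; [exact: wt_ge0|exact: H]. Qed.

Lemma Ex_ext F G : (forall s, F s = G s) -> Ex F = Ex G.
Proof. by move=> H; apply: eq_bigr => s _; rewrite H. Qed.

Lemma Ex_ge0 F : (forall s, 0 <= F s) -> 0 <= Ex F.
Proof. move=> H; apply: sumr_ge0 => s _; apply: mulr_ge0; [exact: H|exact: wt_ge0]. Qed.

Lemma Ex1 : Ex (fun _ => 1) = 1.
Proof.
rewrite /Ex /wt.
under eq_bigr do rewrite mul1r.
rewrite -(bigA_distr_bigA (fun (u : node) (x : bool) => if x then p else 1 - p)).
rewrite big1 // => u _; rewrite big_bool /=; plra.
Qed.

Lemma bp_Ex (E : pred assignment) : bernoulli_prob p E = Ex (fun s => (E s)%:R).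
Proof.
rewrite /bernoulli_prob /Ex big_mkcond; apply: eq_bigr => s _.
by case: (E s); rewrite ?mul1r ?mul0r.
Qed.

Definition flip (d : node) (s : assignment) : assignment :=
  [ffun v => if v == d then ~~ s v else s v].

Lemma flipK d : involutive (flip d).
Proof. move=> s; apply/ffunP => v; rewrite !ffunE; case: eqP => //; by rewrite negbK. Qed.

Lemma flip_d d s : flip d s d = ~~ s d.
Proof. by rewrite ffunE eqxx. Qed.

Lemma coord (d : node) (H : assignment -> R) (g : bool -> R) :
  (forall s, H (flip d s) = H s) ->
  Ex (fun s => H s * g (s d)) = Ex H * (p * g true + (1 - p) * g false).
Proof.
move=> Hf.
pose wd (x : bool) : R := if x then p else 1 - p.
pose wr (s : assignment) : R := \prod_(u | u != d) wd (s u).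
have Ew : forall s, wt s = wd (s d) * wr s by move=> s; rewrite /wt (bigD1 d).
pose K s := H s * wr s.
have Kf : forall s, K (flip d s) = K s.
  move=> s; rewrite /K Hf; congr (_ * _); apply: eq_bigr => u Hu.
  by rewrite ffunE (negPf Hu).
have gen : forall phi : bool -> R,
    \sum_(s : assignment) K s * phi (s d) = (phi true + phi false) * \sum_(s : assignment | s d) K s.
  move=> phi; rewrite (bigID (fun s : {ffun node -> bool} => s d)) /=.
  rewrite mulrDl !big_distrr /=; congr (_ + _).
    by apply: eq_bigr => s ->; rewrite mulrC.
  rewrite (reindex_inj (can_inj (flipK d))) /=.
  apply: eq_big => [s|s Hs]; first by rewrite flip_d negbK.
  by move: Hs; rewrite Kf !flip_d negbK => ->; rewrite mulrC.
have E1 : Ex (fun s => H s * g (s d)) = \sum_(s : assignment) K s * (g (s d) * wd (s d)).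
  apply: eq_bigr => s _; rewrite Ew /K /=.
  by move: (H s) (g (s d)) (wd (s d)) (wr s) => a b c e; ring.
have E2 : Ex H = \sum_(s : assignment) K s * wd (s d).
  apply: eq_bigr => s _; rewrite Ew /K /=.
  by move: (H s) (wd (s d)) (wr s) => a c e; ring.
rewrite E1 E2 (gen (fun x => g x * wd x)) (gen wd) /=; move: (\sum_(s : assignment | s d) K s) => S.
move: (g true) (g false) => a b; ring.
Qed.


Definition dep (F : assignment -> R) (A : pred node) :=
  forall s s' : assignment, (forall v, A v -> s v = s' v) -> F s = F s'.

Lemma dep_sub F (A A' : pred node) : dep F A -> (forall v, A v -> A' v) -> dep F A'.
Proof. by move=> H Hs s s' E; apply: H => v Hv; apply: E; apply: Hs. Qed.

Lemma dep_mul F G A : dep F A -> dep G A -> dep (fun s => F s * G s) A.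
Proof. by move=> HF HG s s' E; rewrite (HF s s' E) (HG s s' E). Qed.

Lemma dep_prod (I : eqType) (r : seq I) (F : I -> assignment -> R) A :
  (forall i, i \in r -> dep (F i) A) -> dep (fun s => \prod_(i <- r) F i s) A.
Proof.
move=> H s s' E; rewrite big_seq_cond [RHS]big_seq_cond; apply: eq_bigr => i /andP[Hi _].
exact: H.
Qed.

Lemma dep_flip H d : dep H (fun v => ~~ (v == d)) -> forall s, H (flip d s) = H s.
Proof. move=> Hd s; apply: Hd => v Hv; by rewrite ffunE (negPf Hv). Qed.

Lemma multi (F : node -> assignment -> R) (Reg : node -> pred node) (q : R) (A : seq node) :
  0 <= q -> uniq A ->
  (forall d, d \in A -> forall s, 0 <= F d s) ->
  (forall d, d \in A -> dep (F d) (Reg d)) ->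
  (forall d d' v, d \in A -> d' \in A -> d != d' -> Reg d v -> Reg d' v -> False) ->
  (forall d, d \in A -> forall H, (forall s, 0 <= H s) -> dep H (fun v => ~~ Reg d v) ->
       Ex (fun s => H s * F d s) <= Ex H * q) ->
  forall H, (forall s, 0 <= H s) -> (forall d, d \in A -> dep H (fun v => ~~ Reg d v)) ->
  Ex (fun s => H s * \prod_(d <- A) F d s) <= Ex H * q ^+ size A.
Proof.
move=> q0; elim: A => [|a A IH] /= UA HF HD Hdisj Hone H H0 HH.
  by rewrite expr0 mulr1; apply: Ex_mono => s; rewrite big_nil mulr1.
case/andP: UA => aA UA.
have sub : forall d, d \in A -> d \in a :: A by move=> d Hd; rewrite inE Hd orbT.
rewrite (@Ex_ext _ (fun s => (H s * \prod_(d <- A) F d s) * F a s)); last first.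
  by move=> s; rewrite big_cons [F a s * _]mulrC mulrA.
apply: (le_trans (Hone a (mem_head _ _) (fun s => H s * \prod_(d <- A) F d s) _ _)).
- move=> s; apply: mulr_ge0 => //; rewrite big_seq; apply: prodr_ge0 => d Hd.
  exact: HF (sub _ Hd) s.
- apply: dep_mul; first exact: HH (mem_head _ _).
  apply: dep_prod => d Hd; apply: (dep_sub (HD d (sub _ Hd))) => v Hv; apply/negP => Ha.
  apply: (Hdisj d a v (sub _ Hd) (mem_head _ _)) => //.
  by apply/eqP => E; subst d; rewrite Hd in aA.
rewrite exprS mulrCA [q * _]mulrC; apply: ler_wpM2r => //.
apply: IH => //.
- by move=> d Hd; apply: HF; apply: sub.
- by move=> d Hd; apply: HD; apply: sub.
- by move=> d d' v Hd Hd'; apply: Hdisj; apply: sub.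
- by move=> d Hd; apply: Hone; apply: sub.
- by move=> d Hd; apply: HH; apply: sub.
Qed.

Definition desc (c v : node) : bool :=
  (depth c <= depth v)%N && (take (depth c) (path_of v) == path_of c).

Lemma desc_child c d : child c d -> desc c d.
Proof.
move=> H; rewrite /desc (child_depth H) leqnSn /=; apply/eqP; exact: child_path.
Qed.

Lemma desc_trans c d v : child c d -> desc d v -> desc c v.
Proof.
move=> H /andP[Hdv /eqP Hp]; rewrite /desc; rewrite (child_depth H) in Hdv.
apply/andP; split; first lia.
apply/eqP; rewrite -(@take_takel _ _ (depth d)); last by rewrite (child_depth H).
by rewrite Hp child_path.
Qed.

Lemma desc_disj c d d' v : child c d -> child c d' -> desc d v -> desc d' v -> d = d'.
Proof.
move=> H H' /andP[_ /eqP Hp] /andP[_ /eqP Hp'].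
have Ed : depth d = depth d' by rewrite (child_depth H) (child_depth H').
by apply: node_eq => //; rewrite -Hp -Hp' Ed.
Qed.

Definition children (c : node) : {set node} := [set d | child c d].

Lemma card_children (c : node) : ((depth c).+1 < D)%N -> (B <= #|children c|)%N.
Proof.
move=> Hlt.
pose f (i : 'I_B) : node := @existT 'I_D (node_fam B) (Ordinal Hlt) (rcons_tuple (tagged c) i).
have fP : forall i, path_of (f i) = rcons (path_of c) i by [].
have finj : injective f.
  by move=> i j E; apply: (@rcons_injr _ (path_of c)); rewrite -!fP E.
have fc : forall i, f i \in children c.
  move=> i; rewrite inE /child; apply/andP; split => //.
  by rewrite fP -cats1 -size_path take_size_cat.
rewrite -{1}(card_ord B) -(card_imset _ finj).
apply: subset_leq_card; apply/subsetP => x /imsetP[i _ ->]; exact: fc.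
Qed.


Variable a : R.
Hypothesis a1 : 1 <= a.

Definition gch (x : bool) : R := if x then a else a^-1.

Lemma gch_ge0 x : 0 <= gch x.
Proof. rewrite /gch; have h := a1; case: x; [lra|rewrite invr_ge0; lra]. Qed.

Fixpoint Phi (m : nat) (c : node) (s : assignment) : R :=
  match m with
  | 0 => \prod_(d in children c) gch (s d)
  | m'.+1 => \sum_(T in powerset (children c) | (#|children c| <= (#|T|).*2)%N)
               \prod_(d in T) Phi m' d s
  end.

Lemma Phi_ge0 m c s : 0 <= Phi m c s.
Proof.
elim: m c => [|m IH] c /=; first by apply: prodr_ge0 => d _; exact: gch_ge0.
by apply: sumr_ge0 => T _; apply: prodr_ge0 => d _.
Qed.

Lemma Phi_dep m c : dep (Phi m c) (desc c).
Proof.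
elim: m c => [|m IH] c s s' E /=.
  apply: eq_bigr => d; rewrite inE => Hd; rewrite E //; exact: desc_child.
apply: eq_bigr => T /andP[HT _]; apply: eq_bigr => d Hd.
apply: IH => v Hv; apply: E; apply: (desc_trans (d := d)) => //.
by move: HT; rewrite powersetE => /subsetP /(_ d Hd); rewrite inE.
Qed.

Lemma prod_ge1 (I : Type) (r : seq I) (P : pred I) (F : I -> R) :
  (forall i, P i -> 1 <= F i) -> 1 <= \prod_(i <- r | P i) F i.
Proof.
move=> H; apply: (big_ind (fun x => 1 <= x)) => //.
by move=> x y Hx Hy; apply: mulr_ege1.
Qed.

Lemma count_set (c : node) (P : pred node) :
  count P [seq d <- enum {: node} | child c d] = #|[set d in children c | P d]|.
Proof.
rewrite count_filter cardE -size_filter enumT /enum_mem /=.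
rewrite -!enumT; congr size; apply: eq_filter => d; by rewrite !inE andbC.
Qed.

Lemma size_ch (c : node) : size [seq d <- enum {: node} | child c d] = #|children c|.
Proof.
rewrite -(count_predT [seq d <- enum {: node} | child c d]) count_set.
by apply: eq_card => d; rewrite !inE andbT.
Qed.

Lemma prod_pow (A : {set node}) (P : pred node) (x : R) :
  \prod_(d in A | P d) x = x ^+ #|[set d in A | P d]|.
Proof. rewrite -prodr_const; apply: eq_bigl => d; by rewrite !inE. Qed.

Lemma W_Phi m c s : W s m.+1 c -> 1 <= Phi m c s.
Proof.
elim: m c => [|m IH] c.
  rewrite /= /wmaj size_map count_map size_ch.
  have -> : count (preim (fun c0 => s c0) id) [seq c0 <- enum {: node} | child c c0] =
            count (fun d => s d) [seq c0 <- enum {: node} | child c c0] by [].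
  rewrite count_set => Hw.
  have Hc := count_predC (fun d => s d) [seq c0 <- enum {: node} | child c c0].
  rewrite !count_set size_ch in Hc.
  rewrite (bigID (fun d => s d)) /=.
  rewrite (eq_bigr (fun _ => a)); last by move=> d /andP[_ ->].
  rewrite [X in _ * X](eq_bigr (fun _ => a^-1)); last by move=> d /andP[_ /negPf ->].
  rewrite !prod_pow.
  set k := #|[set d in children c | s d]|.
  set j := #|[set d in children c | ~~ s d]|.
  have Hjk : (j <= k)%N.
    have Hc' : (k + j = #|children c|)%N by exact: Hc.
    rewrite -/k in Hw; lia.
  have Hle : a ^+ j <= a ^+ k := ler_weXn2l a1 Hjk.
  have Hpos : 0 < a ^+ j by apply: exprn_gt0; have h := a1; lra.
  have -> : (1 : R) = a ^+ j * (a ^+ j)^-1 by rewrite mulfV // gt_eqF.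
  by rewrite exprVn; apply: ler_wpM2r => //; rewrite invr_ge0 ltW.
rewrite /= /wmaj size_map count_map size_ch.
have -> : count (preim (W s m.+1) id) [seq c0 <- enum {: node} | child c c0] =
          count (W s m.+1) [seq c0 <- enum {: node} | child c c0] by [].
rewrite count_set => Hw.
set T0 := [set d in children c | W s m.+1 d].
have HT0 : T0 \in powerset (children c).
  by rewrite powersetE; apply/subsetP => d; rewrite inE => /andP[].
rewrite (bigD1 T0) /=; last by rewrite HT0.
have H1 : 1 <= \prod_(d in T0) Phi m d s.
  apply: prod_ge1 => d; rewrite inE => /andP[_]; exact: IH.
apply: le_trans H1 _; rewrite lerDl.
by apply: sumr_ge0 => T _; apply: prodr_ge0 => d _; exact: Phi_ge0.
Qed.


Lemma Ex_sum (P : pred {set node}) (G : {set node} -> assignment -> R) H :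
  Ex (fun s => H s * \sum_(T | P T) G T s) = \sum_(T | P T) Ex (fun s => H s * G T s).
Proof.
rewrite /Ex; under eq_bigr do rewrite mulr_sumr big_distrl /=.
by rewrite exchange_big.
Qed.

Variable rho : R.
Hypothesis rho0 : 0 <= rho.
Hypothesis rho1 : rho <= 1.
Hypothesis Hrho : p * a + (1 - p) * a^-1 <= rho.
Hypothesis HrhoB : rho ^+ B <= (2^-1) ^+ 8.
Variable t : nat.
Hypothesis t1 : (1 <= t)%N.
Hypothesis tB : (8 * t <= B)%N.

Definition Qm (m : nat) : R := (2^-1) ^+ (8 * t ^ m)%N.

Lemma half_bounds : 0 <= (2^-1 : R) /\ (2^-1 : R) <= 1.
Proof. split; lra. Qed.

Lemma Qm_bounds m : 0 <= Qm m /\ Qm m <= 1.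
Proof.
have [h0 h1] := half_bounds.
split; first exact: exprn_ge0.
exact: exprn_ile1.
Qed.

Lemma key_ineq (N e f : nat) : (f + N <= e)%N -> (2^-1 : R) ^+ e * 2 ^+ N <= (2^-1) ^+ f.
Proof.
move=> H.
have -> : e = ((e - N) + N)%N by lia.
rewrite exprD -mulrA -exprMn mulVf ?expr1n ?mulr1; last by rewrite pnatr_eq0.
have [h0 h1] := half_bounds.
apply: ler_wiXn2l => //; lia.
Qed.

Lemma nat_ineq (m N : nat) : (8 * t <= N)%N -> (8 * t ^ m.+1 + N <= 8 * t ^ m * (N %/ 2))%N.
Proof.
move=> tN.
have E1 : (1 <= t ^ m)%N by rewrite expn_gt0; lia.
rewrite expnSr.
move: (t ^ m)%N E1 => E E1.
have h1 := divn_eq N 2. have h2 : (N %% 2 < 2)%N by rewrite ltn_pmod.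
move: (N %/ 2)%N (N %% 2)%N h1 h2 => h r h1 h2.
have h4 : (4 * t <= h)%N by lia.
have : (E * (h - t) >= h - t)%N by rewrite leq_pmull.
nia.
Qed.

Lemma Phi_bound m c : (depth c + m.+2 <= D)%N ->
  forall H, (forall s, 0 <= H s) -> dep H (fun v => ~~ desc c v) ->
  Ex (fun s => H s * Phi m c s) <= Ex H * Qm m.
Proof.
elim: m c => [|m IH] c Hd H H0 HH.
  have HN : (B <= #|children c|)%N by apply: card_children; lia.
  rewrite (@Ex_ext _ (fun s => H s * \prod_(d <- enum (children c)) gch (s d))); last first.
    by move=> s /=; rewrite big_enum.
  apply: (le_trans (y := Ex H * rho ^+ size (enum (children c)))).
    apply: (multi (F := fun d s => gch (s d)) (Reg := fun d v => v == d) (q := rho)) => //.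
    - exact: enum_uniq.
    - by move=> d _ s; exact: gch_ge0.
    - by move=> d _ s s' E; rewrite E.
    - by move=> d d' v _ _ /negP Hne /eqP -> /eqP E; apply: Hne; rewrite E.
    - move=> d _ H' H'0 H'd; rewrite (coord _ (dep_flip H'd)) /gch.
      by apply: ler_wpM2l => //; apply: Ex_ge0.
    - move=> d; rewrite mem_enum inE => Hcd; apply: (dep_sub HH) => v.
      by apply: contra => /eqP ->; apply: desc_child.
  apply: ler_wpM2l; first exact: Ex_ge0.
  rewrite -cardE /Qm expn0 muln1.
  apply: le_trans HrhoB; exact: ler_wiXn2l.
have HN : (B <= #|children c|)%N by apply: card_children; lia.
set N := #|children c|.
have [Q0 Q1] := Qm_bounds m.
rewrite /= Ex_sum.
apply: (le_trans (y := \sum_(T in powerset (children c) | (N <= (#|T|).*2)%N) Ex H * Qm m ^+ (N %/ 2)%N)).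
  apply: ler_sum => T /andP[HT HNT].
  have Tsub : forall d, d \in T -> child c d.
    by move=> d Hd0; move: HT; rewrite powersetE => /subsetP /(_ d Hd0); rewrite inE.
  rewrite (@Ex_ext _ (fun s => H s * \prod_(d <- enum T) Phi m d s)); last first.
    by move=> s /=; rewrite big_enum.
  apply: (le_trans (y := Ex H * Qm m ^+ size (enum T))).
    apply: (multi (F := Phi m) (Reg := desc) (q := Qm m)) => //.
    - exact: enum_uniq.
    - by move=> d _ s; exact: Phi_ge0.
    - by move=> d _; exact: Phi_dep.
    - move=> d d' v; rewrite !mem_enum => Hd1 Hd2 /negP Hne Hv Hv'; apply: Hne.
      by apply/eqP; apply: (desc_disj (Tsub _ Hd1) (Tsub _ Hd2) Hv Hv').
    - move=> d; rewrite mem_enum => Hdt H' H'0 H'd; apply: IH => //.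
      by rewrite (child_depth (Tsub _ Hdt)); lia.
    - move=> d; rewrite mem_enum => Hdt; apply: (dep_sub HH) => v.
      by apply: contra; apply: desc_trans; apply: Tsub.
  apply: ler_wpM2l; first exact: Ex_ge0.
  rewrite -cardE; apply: ler_wiXn2l => //; move: HNT; rewrite /N -muln2 => h; by apply: leq_trans (leq_div2r 2 h) _; rewrite mulnK.
apply: (le_trans (y := \sum_(T in powerset (children c)) Ex H * Qm m ^+ (N %/ 2)%N)).
  rewrite [X in _ <= X](bigID (fun T : {set node} => (N <= (#|T|).*2)%N)) /= lerDl.
  apply: sumr_ge0 => T _; apply: mulr_ge0; [exact: Ex_ge0|exact: exprn_ge0].
rewrite sumr_const card_powerset -mulr_natr -mulrA; apply: ler_wpM2l; first exact: Ex_ge0.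
rewrite natrX /Qm -exprM; apply: key_ineq.
apply: nat_ineq; rewrite /N; lia.
Qed.

End Prob.
Unset Implicit Arguments.

Lemma bernoulli_ineq (y : R) (n : nat) : 0 <= y -> y <= 1 -> (1 - y) ^+ n * (1 + n%:R * y) <= 1.
Proof.
move=> y0 y1; elim: n => [|n IH]; first by rewrite expr0 mul0r addr0 mulr1.
rewrite exprS mulrAC mulrC.
have h0 : 0 <= (1 - y) ^+ n by apply: exprn_ge0; lra.
have h1 : (1 - y) * (1 + n.+1%:R * y) <= 1 + n%:R * y.
  rewrite -addn1 natrD; have hn : 0 <= n%:R :> R by exact: ler0n. nra.
apply: le_trans IH; exact: ler_wpM2l.
Qed.

Lemma rho_ineq (p d : R) : 0 < d -> d <= 1 -> 0 <= p -> p <= (1 - d) / 2 ->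
  p * (1 + d) + (1 - p) * (1 + d)^-1 <= 1 - d ^+ 2 / 2.
Proof.
move=> d0 d1 p0 pd.
have a0 : 0 < 1 + d by lra.
have -> : p * (1 + d) + (1 - p) * (1 + d)^-1 = (p * (1 + d) ^+ 2 + (1 - p)) / (1 + d).
  by field; rewrite gt_eqF.
rewrite ler_pdivrMr //; nra.
Qed.

Lemma final_real (B D t : nat) : (4 <= D)%N -> (1 <= t)%N -> (B <= t * t)%N ->
  (2^-1 : R) ^+ (8 * t ^ (D - 2))%N <= powR 2 (- powR B%:R (1/4 * D%:R)).
Proof.
move=> D4 t1 Bt.
set n := (8 * t ^ (D - 2))%N.
have -> : (2^-1 : R) ^+ n = powR 2 (- n%:R) by rewrite powR_invn ?exprVn //; lra.
apply: ler_powR; first lra.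
rewrite lerN2.
have tR : (1 : R) <= t%:R by rewrite ler1n.
apply: (le_trans (y := powR (t%:R ^+ 2) (1/4 * D%:R))).
  apply: ge0_ler_powR; rewrite ?nnegrE //.
  - by apply: mulr_ge0; [lra|exact: ler0n].
  - by apply: exprn_ge0; lra.
  by rewrite -natrX ler_nat expnS expn1.
rewrite -powR_mulrn; last lra.
rewrite -powRrM.
apply: (le_trans (y := powR t%:R (D - 2)%N%:R)).
  apply: ler_powR => //.
  rewrite natrB; last lia.
  have : (4 : R) <= D%:R by rewrite ler_nat.
  lra.
rewrite powR_mulrn; last lra.
rewrite /n natrM natrX.
have h : 0 <= t%:R ^+ (D - 2) :> R by apply: exprn_ge0; lra.
lra.
Qed.

Lemma rhoB (delta : R) (B : nat) : 0 < delta -> delta <= 1 -> 1024 <= B%:R * delta ^+ 2 ->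
  (1 - delta ^+ 2 / 2) ^+ B <= (2^-1) ^+ 8.
Proof.
move=> d0 d1 HBd.
have dd0 : 0 < delta ^+ 2 by apply: exprn_gt0.
have dd1 : delta ^+ 2 <= 1 by apply: exprn_ile1; lra.
have y0 : 0 <= delta ^+ 2 / 2 by lra.
have y1 : delta ^+ 2 / 2 <= 1 by lra.
have Hb := @bernoulli_ineq _ B y0 y1.
move: ((1 - delta ^+ 2 / 2) ^+ B) Hb => X Hb.
have HY : 512 <= B%:R * (delta ^+ 2 / 2) by rewrite mulrA; lra.
move: (B%:R * (delta ^+ 2 / 2)) HY Hb => Y HY Hb.
have -> : (2^-1 : R) ^+ 8 = 256^-1.
  by rewrite exprVn; congr (_^-1); rewrite !exprS expr0; lra.
rewrite -div1r ler_pdivlMr; last lra.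
case: (lerP 0 X) => hX; nra.
Qed.

Lemma nat_facts (B : nat) : (1024 <= B)%N ->
  (1 <= B %/ 8)%N /\ (8 * (B %/ 8) <= B)%N /\ (B <= (B %/ 8) * (B %/ 8))%N.
Proof.
move=> HB; have h1 := divn_eq B 8; have h2 : (B %% 8 < 8)%N by rewrite ltn_pmod.
move: (B %/ 8)%N (B %% 8)%N h1 h2 => x y h1 h2.
have hx : (128 <= x)%N by lia.
have hxx : (9 * x <= x * x)%N by rewrite leq_mul2r; apply/orP; right; lia.
split; [lia|split; lia].
Qed.

Theorem claim8p2 :
  exists (C c : Rdefinitions.R) (D0 : nat), 0 < C /\ 0 < c /\
  forall (delta p : Rdefinitions.R) (B D : nat),
    0 < delta <= 1 ->
    0 <= p <= (1 - delta) / 2 ->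
    C / delta ^+ 2 <= B%:R ->
    (2 <= D)%N -> (D0 <= D)%N ->
    error_prob D B p <= powR 2 (- powR B%:R (c * D%:R)).
Proof.
exists 1024, (1/4), 4%N; split; first lra; split; first lra.
move=> delta p B D /andP[d0 d1] /andP[p0 pd] HB D2 D4.
have p1 : p <= 1 by lra.
have dd0 : 0 < delta ^+ 2 by apply: exprn_gt0.
have dd1 : delta ^+ 2 <= 1 by apply: exprn_ile1; lra.
have HBd : 1024 <= B%:R * delta ^+ 2 by rewrite -ler_pdivrMr.
have HB1024 : (1024 <= B)%N.
  rewrite -(ler_nat R).
  have hB : 0 <= B%:R :> R by exact: ler0n.
  nra.
have [t1 [tB Btt]] := nat_facts B HB1024.
set t := (B %/ 8)%N in t1 tB Btt.
set a : R := 1 + delta.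
have a1 : 1 <= a by rewrite /a; lra.
set rho : R := 1 - delta ^+ 2 / 2.
have rho0 : 0 <= rho by rewrite /rho; lra.
have rho1 : rho <= 1 by rewrite /rho; lra.
have Hrho : p * a + (1 - p) * a^-1 <= rho by apply: rho_ineq.
have HrhoB : rho ^+ B <= (2^-1) ^+ 8 by apply: rhoB.
rewrite /error_prob bp_Ex.
case: (pickP (fun u : node D B => depth u == 0%N)) => [u0 /eqP Hu0|Hnone].
  apply: (le_trans (y := Ex p (fun s => 1 * Phi a (D - 2) u0 s))).
    apply: Ex_mono => // s; rewrite mul1r.
    case He: (decoding_error s); last exact: Phi_ge0.
    have [u [Hu HW]] := decode_W D2 He.
    have Eu : u = u0.
      apply: node_eq; first by rewrite Hu Hu0.
      have Pu : path_of u = [::] by apply: size0nil; rewrite size_path Hu.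
      have Pu0 : path_of u0 = [::] by apply: size0nil; rewrite size_path Hu0.
      by rewrite Pu Pu0.
    subst u; apply: W_Phi => //.
  apply: (le_trans (y := Ex p (fun _ => 1) * Qm t (D - 2))).
    apply: (Phi_bound p0 p1 a1 rho0 rho1 Hrho HrhoB t1 tB) => //.
    - by rewrite Hu0 add0n -addn2 subnK.
  rewrite Ex1 // mul1r /Qm; exact: final_real.
have -> : Ex p (fun s : assignment D B => (decoding_error s)%:R) = 0.
  rewrite /Ex; apply: big1 => s _.
  case He: (decoding_error s); last by rewrite mul0r.
  have [u [Hu _]] := decode_W D2 He.
  by move: (Hnone u); rewrite Hu eqxx.
exact: powR_ge0.
Qed.
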